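(* Let $\lambda_0\in(0,1/2)$ and let $\nu$ be uniformly distributed on $[0,\pi]$, $n_1=\cos\nu$. Then $$E\left[|n_1|\arctan\left(\frac{4\lambda_0|n_1|}{4\lambda_0^2-1}\right)\right]=-2\lambda_0.$$
   Context: $\arctan$ denotes the principal branch with values in $(-\pi/2,\pi/2)$. *)

(* Defs.v *)
From Stdlib Require Import Reals.
From Coquelicot Require Import Coquelicot.
Open Scope R_scope.

Definition uniform_0_pi_expect (g : R -> R) : R := RInt g 0 PI / PI.

(* Main.v *)
Require Import Defs.
From Stdlib Require Import Reals.
From Coquelicot Require Import Coquelicot.
Open Scope R_scope.
From Stdlib Require Import Lra FunctionalExtensionality.
Lemma alg (c k C S A : R) : c^2 = k^2 + 2*k -> S^2 + C^2 = 1 -> 0 < k -> c <> 0 ->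
 1 * C * A +
 S * (c * (1 * - S) * / (1 + c * C * (c * C * 1))) +
 (k * 1 +
  -
  ((1 + k) *
   (((k * (1 * C) * C + k * S * (1 * - S)) *
     / (1 + k * (C * (C * 1))) +
     k * S * C *
     (- (k * (1 * - S * ((1 + 1) * (C * 1)))) *
      / ((1 + k * (C * (C * 1))) * (1 + k * (C * (C * 1)))))) *
    /
    (1 +
     k * S * C * / (1 + k * (C * (C * 1))) *
     (k * S * C * / (1 + k * (C * (C * 1))) * 1))))) *
 / c = C * A.
Proof.
intros Hc2 HS Hk Hc.
assert (HC2 : 0 <= C^2) by nra.
assert (HD : 0 < 1 + k * C^2) by nra.
assert (HD2 : 0 < (1 + k*C^2)^2 + k^2 * S^2 * C^2) by nra.
assert (HE : 0 < 1 + c^2 * C^2) by nra.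
assert (Hb : - c^2 * S^2 / (1 + c^2 * C^2) + k - (1+k) * ((k * (C^2 - S^2) * (1 + k*C^2) + 2 * k^2 * S^2 * C^2) / ((1 + k*C^2)^2 + k^2 * S^2 * C^2)) = 0).
{ replace (S^2) with (1 - C^2) by lra. rewrite Hc2.
  replace (1 - C^2) with (1 - C^2) by ring.
  field. assert (C^2 <= 1) by (assert (0<=S^2) by apply pow2_ge_0; lra).
  assert (0 <= k^2*(1-C^2)) by (apply Rmult_le_pos; [apply pow2_ge_0|lra]).
  assert (0 <= k^2*(1-C^2)*C^2) by (apply Rmult_le_pos; [lra|apply pow2_ge_0]).
  assert (1 <= (1 + k*C^2)^2) by nra. lra. }
transitivity (C*A + (- c^2 * S^2 / (1 + c^2 * C^2) + k - (1+k) * ((k * (C^2 - S^2) * (1 + k*C^2) + 2 * k^2 * S^2 * C^2) / ((1 + k*C^2)^2 + k^2 * S^2 * C^2)))/c).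
{ field. repeat split; try lra; nra. }
rewrite Hb. field. exact Hc.
Qed.

Lemma deriv_F (c k x : R) : 0 < k ->
  is_derive (fun y => sin y * atan (c * cos y) + (k * y - (1+k) * atan (k * sin y * cos y / (1 + k * cos y ^ 2))) / c) x
    (1 * cos x * atan (c * cos x) +
 sin x * (c * (1 * - sin x) * / (1 + c * cos x * (c * cos x * 1))) +
 (k * 1 +
  -
  ((1 + k) *
   (((k * (1 * cos x) * cos x + k * sin x * (1 * - sin x)) *
     / (1 + k * (cos x * (cos x * 1))) +
     k * sin x * cos x *
     (- (k * (1 * - sin x * ((1 + 1) * (cos x * 1)))) *
      / ((1 + k * (cos x * (cos x * 1))) * (1 + k * (cos x * (cos x * 1)))))) *
    /
    (1 +
     k * sin x * cos x * / (1 + k * (cos x * (cos x * 1))) *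
     (k * sin x * cos x * / (1 + k * (cos x * (cos x * 1))) * 1))))) *
 / c).
Proof.
intros Hk. auto_derive.
{ assert (0 <= cos x * cos x) by nra. nra. }
reflexivity.
Qed.

Lemma abs_even (c x : R) : Rabs x * atan (c * Rabs x) = x * atan (c * x).
Proof.
destruct (Rcase_abs x) as [H|H].
- rewrite Rabs_left by lra. replace (c * - x) with (- (c * x)) by ring.
  rewrite atan_opp. ring.
- rewrite Rabs_right by lra. reflexivity.
Qed.

Theorem lemma8 (lambda0 : R) (h0 : 0 < lambda0) (h1 : lambda0 < 1/2) :
  uniform_0_pi_expect
    (fun nu => Rabs (cos nu) *
               atan (4 * lambda0 * Rabs (cos nu) / (4 * lambda0 ^ 2 - 1)))
  = -2 * lambda0.
Proof.
set (c := 4 * lambda0 / (4 * lambda0 ^ 2 - 1)).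
set (k := 8 * lambda0 ^ 2 / (1 - 4 * lambda0 ^ 2)).
assert (Hden : 0 < 1 - 4 * lambda0 ^ 2) by nra.
assert (Hk : 0 < k) by (unfold k; apply Rdiv_lt_0_compat; nra).
assert (Hc : c <> 0).
{ unfold c. intro H. unfold Rdiv in H. apply Rmult_integral in H. destruct H as [H|H]. lra.
  revert H. apply Rinv_neq_0_compat. lra. }
assert (Hc2 : c^2 = k^2 + 2*k). { unfold c, k. field. lra. }
unfold uniform_0_pi_expect.
replace (fun nu => Rabs (cos nu) * atan (4 * lambda0 * Rabs (cos nu) / (4 * lambda0 ^ 2 - 1)))
  with (fun nu => cos nu * atan (c * cos nu)).
2:{ apply functional_extensionality. intro nu. rewrite <- abs_even. f_equal. f_equal.
    unfold c. field. lra. }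
set (F := fun y => sin y * atan (c * cos y) + (k * y - (1+k) * atan (k * sin y * cos y / (1 + k * cos y ^ 2))) / c).
assert (HI : is_RInt (fun nu => cos nu * atan (c * cos nu)) 0 PI (minus (F PI) (F 0))).
{ apply (is_RInt_derive F (fun nu => cos nu * atan (c * cos nu))).
  - intros x _. unfold F. eapply is_derive_ext. { intro t. reflexivity. }
    pose proof (deriv_F c k x Hk) as H.
    replace (cos x * atan (c * cos x)) with
     (1 * cos x * atan (c * cos x) +
 sin x * (c * (1 * - sin x) * / (1 + c * cos x * (c * cos x * 1))) +
 (k * 1 +
  -
  ((1 + k) *
   (((k * (1 * cos x) * cos x + k * sin x * (1 * - sin x)) *
     / (1 + k * (cos x * (cos x * 1))) +
     k * sin x * cos x *
     (- (k * (1 * - sin x * ((1 + 1) * (cos x * 1)))) *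
      / ((1 + k * (cos x * (cos x * 1))) * (1 + k * (cos x * (cos x * 1)))))) *
    /
    (1 +
     k * sin x * cos x * / (1 + k * (cos x * (cos x * 1))) *
     (k * sin x * cos x * / (1 + k * (cos x * (cos x * 1))) * 1))))) *
 / c).
    + exact H.
    + apply alg; auto. rewrite <- (sin2_cos2 x). unfold Rsqr. ring.
  - intros x _. apply (@ex_derive_continuous R_AbsRing R_NormedModule (fun nu => cos nu * atan (c * cos nu)) x). auto_derive. auto. }
rewrite (is_RInt_unique _ _ _ _ HI).
unfold F, minus, plus, opp. simpl.
rewrite sin_PI, cos_PI, sin_0, cos_0.
replace (k * 0 * -1 / (1 + k * (-1 * (-1 * 1)))) with 0 by (field; nra).
replace (k * 0 * 1 / (1 + k * (1 * (1 * 1)))) with 0 by (field; nra).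
rewrite atan_0.
assert (HPI : PI <> 0) by (pose proof PI_RGT_0; lra).
unfold k, c. field. repeat split; try lra; nra.
Qed.
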